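(* Let $\mathcal{T}$ be a tangle of order $k$ in a connectivity system $(E,\lambda)$, and let $\mathcal{S}$ be a tree compatible set. Let $n\geq 2$, and let $\Phi=(P_1,\ldots,P_n)$ be a $k$-flower in $\mathcal{T}$. If $P_1\subseteq \mathrm{fcl}_{\mathcal{T}}(P_2)$, then the concatenation $\Phi '=(P_1\cup P_2,P_3,\ldots, P_n)$ of $\Phi$ is $\mathcal{T}$-equivalent to $\Phi$ with respect to $\mathcal{S}$.
   Context: A connectivity system is a pair $(E,\lambda)$ with $E$ finite and $\lambda$ an integer-valued symmetric submodular function on subsets of $E$. $X$ is $k$-separating if $\lambda(X)\le k$; a $k$-separation is an unordered partition $(X,E-X)$ with $\lambda(X)\le k$. A tangle of order $k$ is a collection $\mathcal T$ of subsets of $E$ with (T1) $\lambda(A)<k$ for $A\in\mathcal T$; (T2) if $\lambda(A)\le k-1$ then $A$ or $E-A$ is in $\mathcal T$; (T3) $A\cup B\cup C\ne E$ for $A,B,C\in\mathcal T$; (T4) $E-\{e\}\notin\mathcal T$. A set is $\mathcal T$-weak if contained in a member of $\mathcal T$, otherwise $\mathcal T$-strong; partitions/$k$-separations are $\mathcal T$-strong if all parts are. A $\mathcal T$-strong $k$-separating $X$ is fully closed if $X\cup Y$ is not $k$-separating for every nonempty $\mathcal T$-weak $Y\subseteq E-X$; $\mathrm{fcl}_{\mathcal T}(X)$ is the intersection of all fully closed $k$-separating sets containing $X$. $\mathcal T$-strong $k$-separations $(X,Y),(X',Y')$ are $\mathcal T$-equivalent if $\{\mathrm{fcl}_{\mathcal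 T}(X),\mathrm{fcl}_{\mathcal T}(Y)\}=\{\mathrm{fcl}_{\mathcal T}(X'),\mathrm{fcl}_{\mathcal T}(Y')\}$. $X$ is $\mathcal T$-sequential if it is $k$-separating, $E-X$ is $\mathcal T$-strong and $\mathrm{fcl}_{\mathcal T}(E-X)=E$. Let $\mathcal S$ be a set of non-$\mathcal T$-sequential $k$-separating sets with $\mathcal T$-strong complements; a $(k,\mathcal S)$-separation is a $k$-separation $(X,E-X)$ with $X,E-X\in\mathcal S$. $\mathcal S$ is tree compatible if (S1) any $\mathcal T$-strong $k$-separation $\mathcal T$-equivalent to a $(k,\mathcal S)$-separation is a $(k,\mathcal S)$-separation, and (S2) if $X\in\mathcal S$ and $(Y,E-Y)$ is a $\mathcal T$-strong $k$-separation with $X\subseteq Y$ then $Y\in\mathcal S$. A $k$-flower in $\mathcal T$ is a $\mathcal T$-strong partition $(P_1,\dots,P_n)$ of $E$ with $P_i$ and $P_i\cup P_{i+1}$ $k$-separating for all $i$ (mod $n$); it displays $(X,E-X)$ if $X$ is a union of petals. $\Phi_1\preccurlyeq_{\mathcal S}\Phi_2$ if each $(k,\mathcal S)$-separation displayed by $\Phi_1$ is $\mathcal T$-equivalent to some $(k,\mathcal S)$-separation displayed by $\Phi_2$; $\Phi_1,\Phi_2$ are $\mathcal T$-equivalent with respect to $\mathcal S$ if both $\Phi_1\preccurlyeq_{\mathcal S}\Phi_2$ and $\Phi_2\preccurlyeq_{\mathcal S}\Phi_1$. *)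

(* Defs.v *)
From mathcomp Require Import all_boot all_order all_algebra.
Set Implicit Arguments. Unset Strict Implicit. Unset Printing Implicit Defensive.
Import Order.TTheory GRing.Theory Num.Theory.
Local Open Scope ring_scope.

Section Conn.
Variables (E : finType) (lam : {set E} -> int) (k : int).

Definition conn_system : Prop :=
  (forall X : {set E}, lam X = lam (~: X)) /\
  (forall X Y : {set E}, lam (X :|: Y) + lam (X :&: Y) <= lam X + lam Y).

Definition ksep (X : {set E}) : bool := lam X <= k.

Definition is_tangle (T : {set {set E}}) : Prop :=
  (forall A, A \in T -> lam A < k) /\
  (forall A, lam A <= k - 1 -> (A \in T) \/ (~: A \in T)) /\
  (forall A B C, A \in T -> B \in T -> C \in T -> A :|: B :|: C != setT) /\
  (forall e : E, ~: [set e] \notin T).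

Variable T : {set {set E}}.

Definition weak (X : {set E}) : bool := [exists A in T, X \subset A].
Definition strong (X : {set E}) : bool := ~~ weak X.

Definition fully_closed (X : {set E}) : bool :=
  [&& strong X, ksep X &
     [forall Y : {set E},
        ((Y != set0) && weak Y && (Y \subset ~: X)) ==> ~~ ksep (X :|: Y)]].

Definition fcl (X : {set E}) : {set E} :=
  \bigcap_(Z | fully_closed Z && (X \subset Z)) Z.

(* T-strong k-separation (X, E - X), represented by the side X *)
Definition strong_ksep (X : {set E}) : bool :=
  [&& ksep X, strong X & strong (~: X)].

(* T-equivalence of the (unordered) separations (X, E-X) and (X', E-X') *)
Definition tequiv (X X' : {set E}) : Prop :=
  (fcl X = fcl X' /\ fcl (~: X) = fcl (~: X')) \/
  (fcl X = fcl (~: X') /\ fcl (~: X) = fcl X').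

Definition sequential (X : {set E}) : bool :=
  [&& ksep X, strong (~: X) & fcl (~: X) == setT].

Variable S : {set {set E}}.

Definition kS_sep (X : {set E}) : bool :=
  [&& ksep X, X \in S & ~: X \in S].

Definition tree_compatible : Prop :=
  (forall X, X \in S -> [/\ ksep X, strong (~: X) & ~~ sequential X]) /\
  (forall X Y, strong_ksep X -> kS_sep Y -> tequiv X Y -> kS_sep X) /\
  (forall X Y, X \in S -> strong_ksep Y -> X \subset Y -> Y \in S).

(* flowers as sequences of petals P_1,...,P_n (index i <-> P_(i+1)) *)
Definition petal (Phi : seq {set E}) (i : nat) : {set E} := nth set0 Phi i.

Definition strong_partition (Phi : seq {set E}) : Prop :=
  [/\ forall i, (i < size Phi)%N -> petal Phi i != set0,
      forall i j, (i < size Phi)%N -> (j < size Phi)%N -> i != j ->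
        [disjoint petal Phi i & petal Phi j],
      \bigcup_(i < size Phi) petal Phi i = setT &
      forall i, (i < size Phi)%N -> strong (petal Phi i)].

Definition kflower (Phi : seq {set E}) : Prop :=
  strong_partition Phi /\
  forall i, (i < size Phi)%N ->
    ksep (petal Phi i) /\
    ksep (petal Phi i :|: petal Phi ((i.+1) %% size Phi)).

Definition displays (Phi : seq {set E}) (X : {set E}) : Prop :=
  exists I : {set 'I_(size Phi)}, X = \bigcup_(i in I) petal Phi i.

Definition flower_le (Phi1 Phi2 : seq {set E}) : Prop :=
  forall X, kS_sep X -> displays Phi1 X ->
    exists2 Y, kS_sep Y /\ displays Phi2 Y & tequiv X Y.

Definition flower_equiv (Phi1 Phi2 : seq {set E}) : Prop :=
  flower_le Phi1 Phi2 /\ flower_le Phi2 Phi1.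

End Conn.

(* Main.v *)
Require Import Defs.
From mathcomp Require Import all_boot all_order all_algebra zify.
Import Order.TTheory GRing.Theory Num.Theory.
Local Open Scope ring_scope.
Set Implicit Arguments. Unset Strict Implicit. Unset Printing Implicit Defensive.

Lemma weak_sub (E : finType) (T : {set {set E}}) (A B : {set E}) :
  weak T A -> B \subset A -> weak T B.
Proof.
move=> /existsP [C /andP [CT AC]] BA; apply/existsP; exists C.
by rewrite CT (subset_trans BA AC).
Qed.

Lemma strong_sup (E : finType) (T : {set {set E}}) (A B : {set E}) :
  strong T A -> A \subset B -> strong T B.
Proof. by move=> sA AB; apply/negP => wB; move/negP: sA; apply; apply: weak_sub wB AB. Qed.

Lemma lamC (E : finType) (lam : {set E} -> int) A :
  conn_system lam -> lam (~: A) = lam A.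
Proof. by case=> h _; rewrite [RHS]h. Qed.

Lemma lamS (E : finType) (lam : {set E} -> int) A B :
  conn_system lam -> lam (A :|: B) + lam (A :&: B) <= lam A + lam B.
Proof. by case=> _ h; apply: h. Qed.

Lemma lam_ge (E : finType) (lam : {set E} -> int) k T A :
  is_tangle lam k T -> strong T A -> strong T (~: A) -> k <= lam A.
Proof.
case=> _ [T2 _] sA sC.
case: (lerP k (lam A)) => // lt.
have : lam A <= k - 1 by lia.
move=> /T2 [] h.
  by move/negP: sA; case; apply/existsP; exists A; rewrite h subxx.
by move/negP: sC; case; apply/existsP; exists (~: A); rewrite h subxx.
Qed.

Lemma fcl_sub E lam k T (X Z : {set E}) :
  fully_closed lam k T Z -> X \subset Z -> fcl lam k T X \subset Z.
Proof. by move=> fZ XZ; rewrite /fcl; apply: (bigcap_inf Z); rewrite fZ XZ. Qed.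

Lemma sub_fcl E lam k T (X : {set E}) : X \subset fcl lam k T X.
Proof. by apply/bigcapsP => Z /andP []. Qed.

Lemma fcl_lb E lam k T (X Q : {set E}) :
  (forall Z, fully_closed lam k T Z -> X \subset Z -> Q \subset Z) ->
  Q \subset fcl lam k T X.
Proof. by move=> h; apply/bigcapsP => Z /andP [] /h. Qed.

Lemma fcl_eq E lam k T (X Y : {set E}) :
  (forall Z, fully_closed lam k T Z -> (X \subset Z) = (Y \subset Z)) ->
  fcl lam k T X = fcl lam k T Y.
Proof.
move=> h; rewrite /fcl; apply: eq_bigl => Z.
by case fZ: (fully_closed lam k T Z) => //=; rewrite h.
Qed.

Lemma fcP E lam k T (Z : {set E}) : fully_closed lam k T Z ->
  [/\ strong T Z, ksep lam k Z &
   forall Y, Y != set0 -> weak T Y -> Y \subset ~: Z -> ~~ ksep lam k (Z :|: Y)].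
Proof.
case/and3P=> sZ kZ /forallP h; split=> // Y Y0 wY YZ.
by move: (h Y); rewrite Y0 wY YZ.
Qed.

Lemma fcI E lam k T (Z : {set E}) :
  strong T Z -> ksep lam k Z ->
  (forall Y, Y != set0 -> weak T Y -> Y \subset ~: Z -> ~~ ksep lam k (Z :|: Y)) ->
  fully_closed lam k T Z.
Proof.
move=> sZ kZ h; rewrite /fully_closed sZ kZ /=; apply/forallP => Y.
by apply/implyP => /andP [/andP [Y0 wY] YZ]; apply: h.
Qed.

Lemma lamT_le E (lam : {set E} -> int) Z : conn_system lam -> lam setT <= lam Z.
Proof.
move=> hc; have := lamS Z (~: Z) hc.
rewrite setUCr setICr (lamC _ hc) -setCT (lamC _ hc); lia.
Qed.

Lemma setC_neq0 E (Z : {set E}) : Z != setT -> ~: Z != set0.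
Proof. by apply: contra => /eqP e; rewrite -(setCK Z) e setC0. Qed.

Lemma fc_compl_strong E lam k T (Z : {set E}) : conn_system lam ->
  fully_closed lam k T Z -> Z != setT -> strong T (~: Z).
Proof.
move=> hc fZ ZT; case/fcP: fZ => sZ kZ h.
apply/negP => w; have := h (~: Z) (setC_neq0 ZT) w (subxx _).
rewrite setUCr /ksep; have := lamT_le Z hc; move: kZ; rewrite /ksep; lia.
Qed.

Lemma stay_in E lam k T (X M Y Z1 : {set E}) : conn_system lam -> is_tangle lam k T ->
  strong T X -> X \subset M -> M \subset Z1 ->
  fully_closed lam k T Z1 -> Z1 != setT ->
  weak T Y -> ksep lam k (M :|: Y) -> Y \subset Z1.
Proof.
move=> hc ht sX XM MZ fZ ZT wY kMY.
have sC := fc_compl_strong hc fZ ZT.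
case/fcP: fZ => sZ kZ h.
case: (boolP (Y :\: Z1 == set0)) => [|Y0]; first by rewrite setD_eq0.
have := h _ Y0 (weak_sub wY (subsetDl _ _)).
rewrite subDset setUCr subsetT => /(_ isT) nk.
have eU : Z1 :|: (Y :\: Z1) = Z1 :|: M :|: Y.
  by rewrite setDE setUIr setUCr setIT (setUidPl MZ).
have ge : k <= lam (Z1 :&: (M :|: Y)).
  apply: (lam_ge ht).
    apply: (strong_sup sX); apply: subset_trans XM _; by rewrite subsetI MZ subsetUl.
  apply: (strong_sup sC); by rewrite setCS subsetIl.
have := lamS Z1 (M :|: Y) hc; rewrite setUA -eU.
move: kMY kZ ge nk; rewrite /ksep; lia.
Qed.

Lemma step E lam k T (X M Y Z Z1 : {set E}) : conn_system lam -> is_tangle lam k T ->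
  strong T X -> X \subset M -> ksep lam k M -> M :|: Y \subset Z1 ->
  fully_closed lam k T Z1 -> Z1 != setT -> weak T Y ->
  fully_closed lam k T Z -> ~: (M :|: Y) \subset Z -> ~: M \subset Z.
Proof.
move=> hc ht sX XM kM MYZ fZ1 Z1T wY fZ cZ.
have sC := fc_compl_strong hc fZ1 Z1T.
case/fcP: fZ => sZ kZ h.
case: (boolP (~: M :\: Z == set0)) => [|D0]; first by rewrite setD_eq0.
have DY : ~: M :\: Z \subset Y.
  apply/subsetP => e; rewrite !inE => /andP [eZ eM].
  case: (boolP (e \in Y)) => // eY; move/subsetP: cZ => /(_ e); rewrite !inE negb_or eM eY /=.
  by move=> /(_ isT); rewrite (negbTE eZ).
have DZ : ~: M :\: Z \subset ~: Z by apply/subsetP=> e; rewrite !inE => /andP [].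
have nk := h _ D0 (weak_sub wY DY) DZ.
have eU : Z :|: (~: M :\: Z) = Z :|: ~: M.
  by rewrite setDE setUIr setUCr setIT.
rewrite eU in nk.
have ge : k <= lam (Z :&: ~: M).
  apply: (lam_ge ht).
    apply: (strong_sup sC); apply/subsetP => e eZ1.
    have eMY : e \in ~: (M :|: Y).
      by rewrite inE; apply/negP => /(subsetP MYZ) e1; move: eZ1; rewrite inE e1.
    by rewrite inE (subsetP cZ _ eMY); move: eMY; rewrite !inE negb_or => /andP [].
  by apply: (strong_sup sX); rewrite setCI setCK (subset_trans XM) // subsetUr.
have := lamS Z (~: M) hc; rewrite (lamC _ hc).
move: kM kZ ge nk; rewrite /ksep; lia.
Qed.

Lemma key E lam k T (X P1 Z Z1 : {set E}) : conn_system lam -> is_tangle lam k T ->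
  strong T X -> ksep lam k X ->
  fully_closed lam k T Z1 -> Z1 != setT -> X \subset Z1 ->
  (forall M, fully_closed lam k T M -> X \subset M -> P1 \subset M) ->
  fully_closed lam k T Z -> ~: X :\: P1 \subset Z -> ~: X \subset Z.
Proof.
move=> hc ht sX kX fZ1 Z1T XZ1 HP fZ WZ.
pose good := fun M : {set E} =>
  [&& X \subset M, ksep lam k M, M \subset Z1 & (~: M \subset Z) ==> (~: X \subset Z)].
have gX : good X by rewrite /good subxx kX XZ1 implybb.
case: (maxset_exists gX) => M mM XM.
have /and4P [_ kM MZ1 gM] := maxsetp mM.
have fM : fully_closed lam k T M.
  apply: fcI => //; first exact: (strong_sup sX XM).
  move=> Y Y0 wY YM; apply/negP => kMY.
  have YZ1 := stay_in hc ht sX XM MZ1 fZ1 Z1T wY kMY.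
  have MYZ1 : M :|: Y \subset Z1 by rewrite subUset MZ1 YZ1.
  have gMY : good (M :|: Y).
    rewrite /good (subset_trans XM (subsetUl _ _)) kMY MYZ1 /=.
    apply/implyP => c; apply: (implyP gM).
    exact: (step hc ht sX XM kM MYZ1 fZ1 Z1T wY fZ c).
  have eq := maxsetsup mM gMY (subsetUl _ _).
  case/set0Pn: Y0 => e eY.
  have : e \in M by rewrite -eq inE eY orbT.
  by move/subsetP: YM => /(_ e eY); rewrite inE => /negbTE ->.
have P1M := HP M fM XM.
apply: (implyP gM); apply: subset_trans WZ.
apply/subsetP => e; rewrite !inE => eM.
apply/andP; split.
  by apply/negP => eP; move: eM; rewrite (subsetP P1M _ eP).
by apply/negP => eX; move: eM; rewrite (subsetP XM _ eX).
Qed.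

Lemma ar1 (k a b c d : int) : a + b <= c + d -> c <= k -> d <= k -> k <= b -> a <= k.
Proof. lia. Qed.

Lemma core E lam k T S (P1 P2 X : {set E}) :
  conn_system lam -> is_tangle lam k T -> tree_compatible lam k T S ->
  strong T P1 -> strong T P2 -> [disjoint P1 & P2] -> ksep lam k (P1 :|: P2) ->
  P1 \subset fcl lam k T P2 ->
  kS_sep lam k S X -> P2 \subset X -> [disjoint P1 & X] ->
  (~: X :\: P1 != set0 -> strong T (~: X :\: P1)) ->
  kS_sep lam k S (X :|: P1) /\ tequiv lam k T X (X :|: P1).
Proof.
move=> hc ht [tc1 [tc2 tc3]] sP1 sP2 d12 k12 P1f kSX P2X d1X hW.
case/and3P: (kSX) => kX XS cXS.
have [_ sXc nsX] := tc1 _ XS.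
have [_ sX nscX] := tc1 _ cXS.
rewrite setCK in sX.
have fclX : fcl lam k T X != setT.
  apply/negP => /eqP e; move/negP: nscX; apply.
  by rewrite /sequential setCK sX e eqxx !andbT /ksep (lamC _ hc).
have HP : forall M, fully_closed lam k T M -> X \subset M -> P1 \subset M.
  by move=> M fM XM; apply: (subset_trans P1f); apply: fcl_sub fM (subset_trans P2X XM).
have P1X : P1 \subset fcl lam k T X := fcl_lb HP.
have [Z1 [fZ1 XZ1 Z1T]] : exists Z1, [/\ fully_closed lam k T Z1, X \subset Z1 & Z1 != setT].
  case: (boolP [forall Z : {set E}, (fully_closed lam k T Z && (X \subset Z)) ==> (Z == setT)]).
    move/forallP => h; move/negP: fclX; case; rewrite eqEsubset subsetT /=.
    apply/bigcapsP => Z /andP [fZ XZ]; by move: (h Z); rewrite fZ XZ /= => /eqP ->.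
  by case/forallPn => Z; rewrite negb_imply => /andP [/andP [fZ XZ] ZT]; exists Z.
have eW : ~: (X :|: P1) = ~: X :\: P1 by rewrite setCU setDE setIC.
have W0 : ~: X :\: P1 != set0.
  apply/negP => /eqP W0; move/negP: fclX; case; rewrite eqEsubset subsetT /=.
  apply/subsetP => e _; case: (boolP (e \in X)) => eX; first by apply: (subsetP (@sub_fcl _ lam k T X)); rewrite eX.
  case: (boolP (e \in P1)) => eP; first exact: (subsetP P1X).
  have : e \in ~: X :\: P1 by rewrite !inE eX eP.
  by rewrite W0 inE.
have sW := hW W0.
have kXP : ksep lam k (X :|: P1).
  have e1 : X :|: (P1 :|: P2) = X :|: P1 by rewrite (setUC P1) setUA (setUidPl P2X).
  have e2 : X :&: (P1 :|: P2) = P2.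
    rewrite setIUr (setIidPr P2X).
    by move: d1X; rewrite disjoint_sym -setI_eq0 => /eqP ->; rewrite set0U.
  have ge : k <= lam P2.
    apply: (lam_ge ht) => //; apply: (strong_sup sP1).
    by apply/subsetP => e eP; rewrite inE; apply/negP => eP2; move: d12; rewrite disjoint_subset => /subsetP /(_ e eP); rewrite inE eP2.
  have := lamS X (P1 :|: P2) hc; rewrite e1 e2 => h.
  exact: (ar1 h kX k12 ge).
have sXP : strong_ksep lam k T (X :|: P1).
  by rewrite /strong_ksep kXP (strong_sup sX (subsetUl _ _)) eW sW.
have g1 : fcl lam k T (X :|: P1) = fcl lam k T X.
  apply: fcl_eq => Z fZ; rewrite subUset; case XZ: (X \subset Z) => //=; exact: HP.
have g2 : fcl lam k T (~: (X :|: P1)) = fcl lam k T (~: X).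
  apply: fcl_eq => Z fZ; rewrite eW; apply/idP/idP.
    exact: (key hc ht sX kX fZ1 Z1T XZ1 HP fZ).
  by apply: subset_trans; apply: subsetDl.
have teq : tequiv lam k T X (X :|: P1) by left; split; [exact: esym g1 | exact: esym g2].
split; last exact: teq.
apply: (tc2 _ _ sXP kSX); left; split; [exact: g1 | exact: g2].
Qed.

Lemma p_cover E T (Phi : seq {set E}) : strong_partition T Phi ->
  forall e, exists i : 'I_(size Phi), e \in petal Phi i.
Proof.
case=> _ _ hc _ e; have : e \in \bigcup_(i < size Phi) petal Phi i by rewrite hc inE.
by case/bigcupP => i _ ei; exists i.
Qed.

Lemma p_uniq E T (Phi : seq {set E}) : strong_partition T Phi ->
  forall (i j : 'I_(size Phi)) e, e \in petal Phi i -> e \in petal Phi j -> i = j.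
Proof.
case=> _ hd _ _ i j e ei ej; apply/eqP; apply/negPn/negP => ij.
have := hd i j (ltn_ord i) (ltn_ord j) ij.
by rewrite disjoint_subset => /subsetP /(_ e ei); rewrite inE ej.
Qed.

Lemma p_in E T (Phi : seq {set E}) (I : {set 'I_(size Phi)}) (i : 'I_(size Phi)) e :
  strong_partition T Phi ->
  e \in petal Phi i -> e \in \bigcup_(j in I) petal Phi j -> i \in I.
Proof.
move=> hp ei /bigcupP [j jI ej]; by rewrite (p_uniq hp ei ej).
Qed.

Lemma p_compl E T (Phi : seq {set E}) (I : {set 'I_(size Phi)}) :
  strong_partition T Phi ->
  ~: (\bigcup_(j in I) petal Phi j) = \bigcup_(j in ~: I) petal Phi j.
Proof.
move=> hp; apply/setP => e; rewrite inE; apply/idP/idP.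
  move=> nX; case: (p_cover hp e) => i ei; apply/bigcupP; exists i => //.
  by rewrite inE; apply/negP => iI; move/negP: nX; apply; apply/bigcupP; exists i.
case/bigcupP => i; rewrite inE => /negP iI ei; apply/negP => eX.
by apply: iI; apply: (p_in hp ei eX).
Qed.

Lemma disp_of E (Phi : seq {set E}) (Y : {set E}) :
  (forall e, e \in Y -> exists i : 'I_(size Phi), e \in petal Phi i /\ petal Phi i \subset Y) ->
  displays Phi Y.
Proof.
move=> h; exists [set i : 'I_(size Phi) | petal Phi i \subset Y]; apply/setP => e; apply/idP/idP.
  by move=> eY; case: (h e eY) => i [ei iY]; apply/bigcupP; exists i; rewrite ?inE.
by case/bigcupP => i; rewrite inE => /subsetP iY /iY.
Qed.

Lemma tequivC E lam k T (X Y : {set E}) :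
  tequiv lam k T (~: X) Y -> tequiv lam k T X Y.
Proof.
by rewrite /tequiv setCK => -[[a b]|[a b]]; [right|left]; split.
Qed.

Lemma kS_C E lam k S (X : {set E}) : conn_system lam ->
  kS_sep lam k S X -> kS_sep lam k S (~: X).
Proof.
move=> hc /and3P [a b c]; rewrite /kS_sep setCK b c /ksep (lamC _ hc) !andbT; exact: a.
Qed.

Lemma disp2 E (P1 P2 : {set E}) rest (Y : {set E}) : P1 :|: P2 \subset Y ->
  (forall e, e \in Y -> e \in P1 :|: P2 \/
     exists m, [/\ (m < size rest)%N, e \in nth set0 rest m & nth set0 rest m \subset Y]) ->
  displays [:: P1 :|: P2 & rest] Y.
Proof.
move=> PY h; apply: disp_of => e eY; case: (h e eY) => [eP|[m [mr em mY]]].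
  by exists ord0.
by exists (@Ordinal (size rest).+1 m.+1 mr).
Qed.

Lemma conv E (P1 P2 : {set E}) rest (Y : {set E}) (i : 'I_(size [:: P1, P2 & rest])) e :
  e \in petal [:: P1, P2 & rest] i -> petal [:: P1, P2 & rest] i \subset Y ->
  e \in P1 :|: P2 \/
  exists m, [/\ (m < size rest)%N, e \in nth set0 rest m & nth set0 rest m \subset Y].
Proof.
case: i => [[|[|m]] Hi] /= ei iY; first by left; rewrite inE ei.
  by left; rewrite inE ei orbT.
by right; exists m.
Qed.

Unset Implicit Arguments.
Theorem lemma4p3 (E : finType) (lam : {set E} -> int) (k : int)
  (T S : {set {set E}}) (P1 P2 : {set E}) (rest : seq {set E}) :
  conn_system lam ->
  is_tangle lam k T ->
  tree_compatible lam k T S ->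
  kflower lam k T [:: P1, P2 & rest] ->
  P1 \subset fcl lam k T P2 ->
  flower_equiv lam k T S [:: P1 :|: P2 & rest] [:: P1, P2 & rest].
Proof.
move=> hc ht tc [hp hk] P1f.
have [_ hd _ hs] := hp.
have sP1 : strong T P1 := hs 0%N isT.
have sP2 : strong T P2 := hs 1%N isT.
have d12 : [disjoint P1 & P2] := hd 0%N 1%N isT isT isT.
have k12 : ksep lam k (P1 :|: P2).
  by have := (hk 0%N isT).2; rewrite /petal /=.
pose i0 : 'I_(size [:: P1, P2 & rest]) := @Ordinal (size rest).+2 0 isT.
pose i1 : 'I_(size [:: P1, P2 & rest]) := @Ordinal (size rest).+2 1 isT.
split.
- move=> X kSX [J eX]; exists X; last by left.
  split => //; apply: disp_of => e; rewrite {1}eX => /bigcupP [j jJ ej].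
  have jX : petal [:: P1 :|: P2 & rest] j \subset X by rewrite eX; apply: bigcup_sup.
  move: j jJ ej jX => [[|m] Hm] _ /= ej jX.
    case/setUP: ej => ei.
      by exists i0; split => //; apply: subset_trans jX; apply: subsetUl.
    by exists i1; split => //; apply: subset_trans jX; apply: subsetUr.
  by exists (@Ordinal (size rest).+2 m.+2 Hm).
have main : forall I : {set 'I_(size [:: P1, P2 & rest])},
    kS_sep lam k S (\bigcup_(i in I) petal [:: P1, P2 & rest] i) -> i1 \in I ->
    exists2 Y, kS_sep lam k S Y /\ displays [:: P1 :|: P2 & rest] Y &
      tequiv lam k T (\bigcup_(i in I) petal [:: P1, P2 & rest] i) Y.
  move=> I kSX i1I.
  set X := \bigcup_(i in I) petal [:: P1, P2 & rest] i in kSX *.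
  have P2X : P2 \subset X := bigcup_sup i1 i1I.
  have petX : forall e, e \in X -> exists2 i : 'I_(size [:: P1, P2 & rest]), e \in petal [:: P1, P2 & rest] i &
      petal [:: P1, P2 & rest] i \subset X.
    by move=> e /bigcupP [j jI ej]; exists j => //; apply: bigcup_sup.
  case: (boolP (i0 \in I)) => i0I.
    have P1X : P1 \subset X := bigcup_sup i0 i0I.
    exists X; last by left.
    split => //; apply: disp2; first by rewrite subUset P1X P2X.
    by move=> e /petX [i ei iX]; exact: (conv ei iX).
  have dis : [disjoint P1 & X].
    rewrite disjoint_subset; apply/subsetP => e eP; rewrite inE; apply/negP => eX.
    by move/negP: i0I; apply; apply: (p_in (i := i0) hp eP eX).
  have hW : ~: X :\: P1 != set0 -> strong T (~: X :\: P1).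
    case/set0Pn => e; rewrite !inE => /andP [eP eX].
    case: (p_cover hp e) => i ei.
    apply: (strong_sup (hs i (ltn_ord i))); apply/subsetP => f fi; rewrite !inE.
    apply/andP; split; apply/negP => h.
      have e0 : i0 = i := p_uniq hp (h : f \in petal [:: P1, P2 & rest] i0) fi.
      by move/negP: eP; apply; rewrite -[P1]/(petal [:: P1, P2 & rest] i0) e0.
    have iI := p_in hp fi h.
    by move/negP: eX; apply; apply/bigcupP; exists i.
  have [kS teq] := core hc ht tc sP1 sP2 d12 k12 P1f kSX P2X dis hW.
  exists (X :|: P1) => //; split => //; apply: disp2.
    by rewrite subUset subsetUr (subset_trans P2X) // subsetUl.
  move=> e /setUP [/petX [i ei iX]|eP]; last by left; rewrite inE eP.
  exact: (conv ei (subset_trans iX (subsetUl _ _))).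
move=> X kSX [I eX]; rewrite eX in kSX *.
case: (boolP (i1 \in I)) => h1; first exact: main.
have := main (~: I); rewrite -(p_compl I hp) => /(_ (kS_C hc kSX)).
rewrite inE h1 => /(_ isT) [Y HY teq]; exists Y => //; exact: tequivC teq.
Qed.
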